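(* Let $C\le A$ be groups. An element $a\in A\setminus C$ is $2$-RF rel $C$ if and only if $aCa^{-1}\cap C=\{\mathrm{id}\}$. Consequently $(A,C)$ is $2$-RF if and only if $C$ is malnormal in $A$; in particular, if $(A,C)$ is $n$-RF for some $2\le n\le\infty$, then $C$ is malnormal in $A$.
   Context: For a group $G$, subgroup $D$, and $2\le n\le\infty$: $a\in G\setminus D$ is $n$-RF rel $D$ if $a^{e_1}d_1\cdots a^{e_k}d_k\ne\mathrm{id}$ for all $k\ge1$, $e_i\in\{\pm1\}$, $d_i\in D$ such that $d_i\ne\mathrm{id}$ whenever $e_i=-e_{i+1}$ (indices mod $k$), and fewer than $n$ of the $e_i$ are $+1$ and fewer than $n$ are $-1$. The pair $(G,D)$ is $n$-RF if every element of $G\setminus D$ is $n$-RF rel $D$. $C$ is malnormal in $A$ if $aCa^{-1}\cap C=\{\mathrm{id}\}$ for all $a\in A\setminus C$. *)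

(* Defs.v *)
From Stdlib Require Import List Arith Lia.
Import ListNotations.

Record Grp := {
  carrier :> Type;
  gmul : carrier -> carrier -> carrier;
  ginv : carrier -> carrier;
  gid : carrier;
  gmulA : forall x y z, gmul x (gmul y z) = gmul (gmul x y) z;
  gmul1l : forall x, gmul gid x = x;
  gmul1r : forall x, gmul x gid = x;
  gmulVl : forall x, gmul (ginv x) x = gid;
  gmulVr : forall x, gmul x (ginv x) = gid
}.

Arguments gmul {G} : rename.
Arguments ginv {G} : rename.
Arguments gid {G} : rename.

Definition is_subgroup (A : Grp) (C : A -> Prop) : Prop :=
  C gid /\ (forall x y, C x -> C y -> C (gmul x y)) /\ (forall x, C x -> C (ginv x)).

Inductive natinf := Fin (n : nat) | Inf.

Definition lt_inf (m : nat) (n : natinf) : Prop :=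
  match n with Fin k => m < k | Inf => True end.

Definition le_inf (m : nat) (n : natinf) : Prop :=
  match n with Fin k => m <= k | Inf => True end.

(* a^e with e = true meaning +1, false meaning -1 *)
Definition gpow1 {A : Grp} (a : A) (e : bool) : A := if e then a else ginv a.

(* the word a^{e_1} d_1 ... a^{e_k} d_k given as the list [(e_1,d_1);...;(e_k,d_k)] *)
Fixpoint word_val {A : Grp} (a : A) (w : list (bool * A)) : A :=
  match w with
  | [] => gid
  | (e, d) :: w' => gmul (gmul (gpow1 a e) d) (word_val a w')
  end.

(* cyclic reducedness: d_i <> id whenever e_i = - e_{i+1} (indices mod k) *)
Definition cyc_cond {A : Grp} (w : list (bool * A)) : Prop :=
  let k := length w in
  forall i, i < k ->
    fst (nth i w (true, gid)) = negb (fst (nth (S i mod k) w (true, gid))) ->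
    snd (nth i w (true, gid)) <> gid.

Definition count_sign {A : Grp} (s : bool) (w : list (bool * A)) : nat :=
  length (filter (fun p => Bool.eqb (fst p) s) w).

Definition n_RF_rel (A : Grp) (D : A -> Prop) (n : natinf) (a : A) : Prop :=
  ~ D a /\
  forall w : list (bool * A),
    1 <= length w ->
    (forall p, In p w -> D (snd p)) ->
    cyc_cond w ->
    lt_inf (count_sign true w) n ->
    lt_inf (count_sign false w) n ->
    word_val a w <> gid.

Definition pair_n_RF (A : Grp) (D : A -> Prop) (n : natinf) : Prop :=
  forall a : A, ~ D a -> n_RF_rel A D n a.

Definition malnormal (A : Grp) (C : A -> Prop) : Prop :=
  forall a : A, ~ C a ->
    forall x : A, ((exists c, C c /\ x = gmul (gmul a c) (ginv a)) /\ C x) <-> x = gid.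

(* Main.v *)
Require Import Defs.
From Stdlib Require Import List Arith Lia Classical.
Import ListNotations.

Section G.
Variable A : Grp.

Lemma cancel_r (x y : A) : gmul x y = gid -> y = ginv x.
Proof.
  intro H. rewrite <- (gmul1l A y), <- (gmulVl A x), <- gmulA, H, gmul1r. reflexivity.
Qed.

Lemma inv_inv (x : A) : ginv (ginv x) = x.
Proof. symmetry. apply cancel_r. apply gmulVl. Qed.

Lemma inv_id : ginv (@gid A) = gid.
Proof. symmetry. apply cancel_r. apply gmul1l. Qed.

Lemma inv_eq_id (x : A) : ginv x = gid -> x = gid.
Proof. intro H. rewrite <- (inv_inv x), H. apply inv_id. Qed.
End G.

Lemma part1 (A : Grp) (C : A -> Prop) (HC : is_subgroup A C) (a : A) (Ha : ~ C a) :
  n_RF_rel A C (Fin 2) a <->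
  (forall x : A, ((exists c, C c /\ x = gmul (gmul a c) (ginv a)) /\ C x) <-> x = gid).
Proof.
  destruct HC as [H1 [HM HI]].
  split.
  - intros [_ HRF] x. split.
    + intros [[c [Hc Hx]] HCx].
      apply NNPP. intro Hne.
      assert (Hcne : c <> gid).
      { intro E. subst c. apply Hne. rewrite Hx, gmul1r, gmulVr. reflexivity. }
      apply (HRF [(true, c); (false, ginv x)]).
      * unfold lt_inf, count_sign; simpl. lia.
      * simpl. intros p [E|[E|[]]]; subst p; simpl; auto.
      * intros i Hi. destruct i as [|[|i]]; simpl in *; intros _.
        -- exact Hcne.
        -- intro E. apply Hne. apply inv_eq_id. exact E.
        -- simpl in Hi; lia.
      * unfold lt_inf, count_sign; simpl. lia.
      * unfold lt_inf, count_sign; simpl. lia.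
      * simpl. rewrite gmul1r, gmulA, <- Hx, gmulVr. reflexivity.
    + intros ->. split; [|exact H1]. exists gid. split; [exact H1|].
      rewrite gmul1r, gmulVr. reflexivity.
  - intros Hmal. split; [exact Ha|].
    intros w Hlen Hin Hcyc Ht Hf. unfold lt_inf, count_sign in Ht, Hf; simpl in Ht, Hf.
    destruct w as [|[e1 d1] [|[e2 d2] [|[e3 d3] w]]].
    + simpl in Hlen. lia.
    + simpl. rewrite gmul1r. intro E.
      assert (C d1) by (apply (Hin (e1, d1)); simpl; auto).
      destruct e1; simpl in E; apply cancel_r in E.
      * apply Ha. rewrite <- (inv_inv A a), <- E. apply HI. auto.
      * apply Ha. rewrite inv_inv in E. rewrite <- E. auto.
    + assert (C d1) by (apply (Hin (e1, d1)); simpl; auto).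
      assert (C d2) by (apply (Hin (e2, d2)); simpl; auto).
      destruct e1, e2; simpl in Ht, Hf; try lia; simpl; rewrite gmul1r; intro E.
      * (* a d1 a^-1 d2 = id *)
        rewrite gmulA in E. apply cancel_r in E.
        assert (Hd : gmul (gmul a d1) (ginv a) = gid).
        { apply Hmal. split; [exists d1; split; [auto|reflexivity]|].
          rewrite <- (inv_inv A (gmul _ _)), <- E. apply HI; auto. }
        apply (Hcyc 1); simpl; auto.
        rewrite E, Hd. apply inv_id.
      * (* a^-1 d1 a d2 = id *)
        rewrite gmulA in E. apply cancel_r in E.
        assert (Ed1 : d1 = gmul (gmul a (ginv d2)) (ginv a)).
        { rewrite E, inv_inv, (gmulA A a (gmul (ginv a) d1) a), (gmulA A a (ginv a) d1), gmulVr, gmul1l,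
            <- gmulA, gmulVr, gmul1r. reflexivity. }
        assert (Hd : d1 = gid).
        { apply Hmal. split; [exists (ginv d2); split; [apply HI; auto|exact Ed1]|auto]. }
        apply (Hcyc 0); simpl; auto.
    + destruct e1, e2, e3; simpl in Ht, Hf; lia.
Qed.

Theorem lemma5p22 (A : Grp) (C : A -> Prop) (HC : is_subgroup A C) :
  (forall a : A, ~ C a ->
     (n_RF_rel A C (Fin 2) a <->
      (forall x : A, ((exists c, C c /\ x = gmul (gmul a c) (ginv a)) /\ C x) <-> x = gid)))
  /\ (pair_n_RF A C (Fin 2) <-> malnormal A C)
  /\ (forall n : natinf, le_inf 2 n -> pair_n_RF A C n -> malnormal A C).
Proof.
  assert (P2 : pair_n_RF A C (Fin 2) <-> malnormal A C).
  { unfold pair_n_RF, malnormal. split; intros H a Ha.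
    - apply (part1 A C HC a Ha). apply H, Ha.
    - apply (part1 A C HC a Ha). apply H, Ha. }
  split; [exact (part1 A C HC)|]. split; [exact P2|].
  intros n Hn H. apply P2. intros a Ha. destruct (H a Ha) as [_ HR].
  split; [exact Ha|]. intros w H1 H2 H3 Ht Hf. apply HR; auto.
  - destruct n; simpl in *; auto; lia.
  - destruct n; simpl in *; auto; lia.
Qed.
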